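(* Let $(G,k)$ be an instance of \textsc{Paw-free Edge Editing} with $k>0$ such that there is no independent set of $k+3$ vertices of $G$ all having the same neighborhood. Let $S$ be the set of vertices covered by a maximal (under inclusion) collection of pairwise edge-disjoint induced paws in $G$. Let $s_1,s_2$ be two adjacent vertices of $G$. If there are more than $4k+6$ vertices that belong to triangle-free connected components of $G-S$ and are adjacent to both $s_1$ and $s_2$, then either $(G,k)$ is a no-instance, or every solution $A$ of $(G,k)$ contains the pair $s_1s_2$.
   Context: The paw is the graph on four vertices $x_1,x_2,x_3,x_4$ with edges $x_1x_2,x_2x_3,x_1x_3,x_3x_4$; a graph is paw-free if it has no induced paw. For a set $A$ of unordered vertex pairs, $G\Delta A$ is the graph on $V(G)$ with edge set the symmetric difference of $E(G)$ and $A$. An instance $(G,k)$ of \textsc{Paw-free Edge Editing} asks whether some set $A$ of at most $k$ vertex pairs makes $G\Delta A$ paw-free; such an $A$ is a solution. Neighborhoods are open neighborhoods $N(v)$. *)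

(* Defs.v *)
(* A simple graph on a finite vertex type T is a symmetric,
   irreflexive boolean relation e : rel T. Unordered vertex pairs are
   2-element sets {set T}. *)
From mathcomp Require Import all_boot.
Set Implicit Arguments.
Unset Strict Implicit.
Unset Printing Implicit Defensive.

Section PawDefs.
Variable T : finType.

Definition simple_graph (e : rel T) : Prop := symmetric e /\ irreflexive e.

Definition nbh (e : rel T) (v : T) : {set T} := [set w | e v w].

Definition vpair (p : {set T}) : bool := #|p| == 2.

Definition edit (e : rel T) (A : {set {set T}}) : rel T :=
  fun x y => (x != y) && (e x y (+) ([set x; y] \in A)).

Definition paw4 := (T * T * T * T)%type.

Definition is_induced_paw (e : rel T) (p : paw4) : bool :=
  let: (x1, x2, x3, x4) := p in
  [&& uniq [:: x1; x2; x3; x4],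
      e x1 x2, e x2 x3, e x1 x3, e x3 x4, ~~ e x1 x4 & ~~ e x2 x4].

Definition paw_free (e : rel T) : Prop := forall p : paw4, ~~ is_induced_paw e p.

Definition paw_edges (p : paw4) : {set {set T}} :=
  let: (x1, x2, x3, x4) := p in
  [set [set x1; x2]; [set x2; x3]; [set x1; x3]; [set x3; x4]].

Definition paw_vertices (p : paw4) : {set T} :=
  let: (x1, x2, x3, x4) := p in [set x1; x2; x3; x4].

Definition is_solution (e : rel T) (k : nat) (A : {set {set T}}) : Prop :=
  [/\ {in A, forall p, vpair p}, #|A| <= k & paw_free (edit e A)].

Definition edge_disjoint_paws (e : rel T) (P : {set paw4}) : Prop :=
  {in P, forall p, is_induced_paw e p} /\
  {in P &, forall p q, p != q -> [disjoint paw_edges p & paw_edges q]}.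

Definition maximal_edge_disjoint_paws (e : rel T) (P : {set paw4}) : Prop :=
  edge_disjoint_paws e P /\
  forall P' : {set paw4}, P \subset P' -> edge_disjoint_paws e P' -> P' = P.

Definition covered (P : {set paw4}) : {set T} := \bigcup_(p in P) paw_vertices p.

Definition del_rel (e : rel T) (S : {set T}) : rel T :=
  fun x y => [&& e x y, x \notin S & y \notin S].

Definition component (e : rel T) (S : {set T}) (v : T) : {set T} :=
  [set w | (w \notin S) && connect (del_rel e S) v w].

Definition triangle_free_on (e : rel T) (C : {set T}) : Prop :=
  forall x y z, x \in C -> y \in C -> z \in C -> ~ [&& e x y, e y z & e x z].

Definition in_tf_component (e : rel T) (S : {set T}) (v : T) : Prop :=
  v \notin S /\ triangle_free_on e (component e S v).

Definition independent (e : rel T) (I : {set T}) : Prop :=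
  {in I &, forall x y, ~~ e x y}.

End PawDefs.

(* Main.v *)
Require Import Defs.
From mathcomp Require Import all_boot.
From mathcomp Require Import zify.
From Stdlib Require Import Lia.

Set Implicit Arguments.
Unset Strict Implicit.
Unset Printing Implicit Defensive.

Lemma edge_neq (T : finType) (f : rel T) (Hirr : irreflexive f) a b :
  f a b -> a != b.
Proof. by move=> H; apply/eqP => E; rewrite E Hirr in H. Qed.

Lemma paw_contra (T : finType) (f : rel T) (Hsym : symmetric f)
  (Hirr : irreflexive f) (Hpf : paw_free f) s1 s2 x y w :
  f s1 s2 -> f s1 x -> f s2 x -> f s1 y -> f s2 y -> ~~ f x y ->
  f x w -> ~~ f y w -> False.
Proof.
move=> H12 H1x H2x H1y H2y Hxy Hxw Hyw.
have Nxy : x != y by apply/eqP => E; rewrite -E Hxw in Hyw.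
have Nwy : w != y by apply/eqP => E; rewrite -E Hxw in Hxy.
have Hwy : f w y = false by rewrite Hsym; apply/negbTE.
have Hyx : f y x = false by rewrite Hsym; apply/negbTE.
case Ha: (f w s1).
  move: (Hpf (w, x, s1, y)); rewrite /is_induced_paw /= !inE.
  rewrite (Hsym w x) Hxw (Hsym x s1) H1x Ha H1y Hwy /= (negbTE Hxy) /=.
  have Fwx : f w x by rewrite Hsym.
  have Fxs : f x s1 by rewrite Hsym.
  by rewrite (negbTE (edge_neq Hirr Fwx)) (negbTE (edge_neq Hirr Ha)) (negbTE Nwy)
    (negbTE (edge_neq Hirr Fxs)) (negbTE Nxy) (edge_neq Hirr H1y).
case Hb: (f w s2).
  move: (Hpf (w, x, s2, y)); rewrite /is_induced_paw /= !inE.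
  rewrite (Hsym w x) Hxw (Hsym x s2) H2x Hb H2y Hwy /= (negbTE Hxy) /=.
  have Fwx : f w x by rewrite Hsym.
  have Fxs : f x s2 by rewrite Hsym.
  by rewrite (negbTE (edge_neq Hirr Fwx)) (negbTE (edge_neq Hirr Hb)) (negbTE Nwy)
    (negbTE (edge_neq Hirr Fxs)) (negbTE Nxy) (edge_neq Hirr H2y).
have N1w : s1 != w by apply/eqP => E; rewrite -E Hsym H1y in Hyw.
have N2w : s2 != w by apply/eqP => E; rewrite -E Hsym H2y in Hyw.
move: (Hpf (s1, s2, x, w)); rewrite /is_induced_paw /= !inE.
rewrite H12 H2x H1x Hxw (Hsym s1 w) Ha (Hsym s2 w) Hb /=.
by rewrite (negbTE (edge_neq Hirr H12)) (negbTE (edge_neq Hirr H1x)) (negbTE N1w)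
  (negbTE (edge_neq Hirr H2x)) (negbTE N2w) (edge_neq Hirr Hxw).
Qed.

Theorem lemma1 (T : finType) (e : rel T) (k : nat)
  (He : simple_graph e) (Hk : 0 < k)
  (Htwins : ~ exists I : {set T},
      [/\ #|I| = k + 3, independent e I &
          {in I &, forall u v, nbh e u = nbh e v}])
  (P : {set paw4 T}) (HP : maximal_edge_disjoint_paws e P)
  (s1 s2 : T) (Hs : e s1 s2)
  (Hmany : exists X : {set T},
      4 * k + 6 < #|X| /\
      forall v, v \in X ->
        [/\ in_tf_component e (covered P) v, e s1 v & e s2 v]) :
  (forall A : {set {set T}}, ~ is_solution e k A) \/
  (forall A : {set {set T}}, is_solution e k A -> [set s1; s2] \in A).
Proof.
right=> A [HA Hcard Hpf].
case: He => Hsym Hirr.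
case Hin: ([set s1; s2] \in A) => //; exfalso.
case: Hmany => X [HX HXv].
set f := edit e A.
have fsym : symmetric f.
  by move=> a b; rewrite /f /edit eq_sym setUC Hsym.
have firr : irreflexive f by move=> a; rewrite /f /edit eqxx.
set X' := [set x in X | [forall p in A, x \notin p]].
have fX : forall x w, x \in X' -> f x w = e x w.
  move=> x w; rewrite inE => /andP[_ /forall_inP H].
  rewrite /f /edit.
  have -> : ([set x; w] \in A) = false.
    by apply/negbTE/negP => /H; rewrite !inE eqxx.
  rewrite addbF; case: eqP => // ->; by rewrite Hirr.
have f12 : f s1 s2 by rewrite /f /edit Hin addbF Hs (edge_neq Hirr Hs).
have X'X : X' \subset X by apply/subsetP => x; rewrite inE => /andP[].
have Hnb : forall x y, x \in X' -> y \in X' -> ~~ e x y -> forall w, e x w = e y w.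
  have H1 : forall x y w, x \in X' -> y \in X' -> ~~ e x y -> e x w -> e y w.
    move=> x y w Hx Hy Hxy Hxw; apply/negPn/negP => Hyw.
    have [_ H1x H2x] := HXv x (subsetP X'X x Hx).
    have [_ H1y H2y] := HXv y (subsetP X'X y Hy).
    apply: (@paw_contra _ f fsym firr Hpf s1 s2 x y w) => //.
    - by rewrite fsym fX // Hsym.
    - by rewrite fsym fX // Hsym.
    - by rewrite fsym fX // Hsym.
    - by rewrite fsym fX // Hsym.
    - by rewrite fX.
    - by rewrite fX.
    - by rewrite fX.
  move=> x y Hx Hy Hxy w; apply/idP/idP; first exact: H1.
  by apply: H1 => //; rewrite Hsym.
have Hcls : forall x, x \in X' -> #|[set y in X' | ~~ e x y]| <= k + 2.
  move=> x Hx; rewrite leqNgt; apply/negP => /card_geqP [s [Us Ss Sub]].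
  apply: Htwins; exists [set y in s]; split.
  - by rewrite cardsE (card_uniqP Us) Ss addn2 addn3.
  - move=> y z; rewrite !inE => /Sub; rewrite inE => /andP[Hy Hxy] /Sub; rewrite inE => /andP[Hz Hxz].
    by rewrite -(Hnb x y Hx Hy Hxy).
  - move=> y z; rewrite !inE => /Sub; rewrite inE => /andP[Hy Hxy] /Sub; rewrite inE => /andP[Hz Hxz].
    by apply/setP => w; rewrite !inE -(Hnb x y Hx Hy Hxy) (Hnb x z Hx Hz Hxz).
have HX' : 2 * k + 4 < #|X'|.
  have sub : X \subset X' :|: cover A.
    apply/subsetP => x Hx; rewrite !inE Hx /=.
    case: (boolP [forall p in A, x \notin p]) => //= /forall_inPn [p Hp].
    by rewrite negbK => xp; apply/bigcupP; exists p.
  have c1 := subset_leq_card sub.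
  have c2 := (leq_card_setU X' (cover A)).1.
  have c3 := (leq_card_cover A).1.
  have c4 : \sum_(p in A) #|p| = 2 * #|A|.
    rewrite (eq_bigr (fun _ => 2)); first by rewrite sum_nat_const mulnC.
    by move=> p /HA /eqP.
  rewrite c4 in c3.
  have := leq_trans c1 (leq_trans c2 (leq_add (leqnn _) c3)).
  move: HX Hcard; rewrite /=. lia.
have tri : forall x y z, x \in X' -> y \in X' -> z \in X' ->
    e x y -> e y z -> e x z -> False.
  move=> x y z Hx Hy Hz Hxy Hyz Hxz.
  have [[nSx Htf] _ _] := HXv x (subsetP X'X x Hx).
  have [[nSy _] _ _] := HXv y (subsetP X'X y Hy).
  have [[nSz _] _ _] := HXv z (subsetP X'X z Hz).
  apply: (Htf x y z).
  - by rewrite inE nSx connect0.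
  - by rewrite inE nSy; apply: connect1; rewrite /del_rel Hxy nSx nSy.
  - by rewrite inE nSz; apply: connect1; rewrite /del_rel Hxz nSx nSz.
  - by rewrite Hxy Hyz Hxz.
have [x Hx] : exists x, x \in X'.
  by apply/set0Pn; rewrite -card_gt0; move: HX'; case: #|X'|.
set Ix := [set y in X' | ~~ e x y].
have [y Hy] : exists y, y \in X' :\: Ix.
  apply/set0Pn; apply/negP; rewrite setD_eq0 => /subset_leq_card.
  have := Hcls x Hx; rewrite -/Ix; move: HX'; lia.
set Iy := [set z in X' | ~~ e y z].
have [z Hz] : exists z, z \in X' :\: (Ix :|: Iy).
  apply/set0Pn; apply/negP; rewrite setD_eq0 => /subset_leq_card.
  have c := leq_card_setU Ix Iy.
  move: (Hy); rewrite inE => /andP[_ Hy'].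
  have := Hcls x Hx; have := Hcls y Hy'; rewrite -/Ix -/Iy.
  move: c.1 HX'; lia.
move: Hy Hz; rewrite !in_setD in_setU => /andP[Ny Hy] /andP[/norP[Nzx Nzy] Hz].
have Hxy : e x y by move: Ny; rewrite /Ix in_set Hy /= negbK.
have Hxz : e x z by move: Nzx; rewrite /Ix in_set Hz /= negbK.
have Hyz : e y z by move: Nzy; rewrite /Iy in_set Hz /= negbK.
exact: (tri x y z Hx Hy Hz Hxy Hyz Hxz).
Qed.
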